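(* Richard Thompson's group $F$ is not presentable by a product.
   Context: Thompson's group $F$ is the group of piecewise linear orientation-preserving homeomorphisms of $[0,1]$ with finitely many breakpoints, all at dyadic rationals, and all slopes integral powers of $2$. An infinite group $\Gamma$ is not presentable by a product if for every homomorphism $\varphi\colon \Gamma_1\times\Gamma_2\to\Gamma$ whose image has finite index in $\Gamma$, at least one of $\varphi(\Gamma_1)$, $\varphi(\Gamma_2)$ is finite. *)

(* Defs.v *)
From Stdlib Require Import Reals List ZArith.
Open Scope R_scope.

Record Grp := {
  gcar :> Type;
  gmul : gcar -> gcar -> gcar;
  ginv : gcar -> gcar;
  gone : gcar;
  gmulA : forall x y z, gmul x (gmul y z) = gmul (gmul x y) z;
  gmul1 : forall x, gmul gone x = x;
  gmulV : forall x, gmul (ginv x) x = gone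
}.

Definition pmul (G1 G2 : Grp) (p q : gcar G1 * gcar G2) : gcar G1 * gcar G2 :=
  (gmul G1 (fst p) (fst q), gmul G2 (snd p) (snd q)).

Definition dyadic (x : R) : Prop :=
  exists (m : Z) (k : nat), x = IZR m / 2 ^ k.

(** Elements of Thompson's group F, realized as maps R -> R that are the
    identity outside [0,1] and, on [0,1], are piecewise linear homeomorphisms
    of [0,1] (fixing 0 and 1) with finitely many dyadic breakpoints and all
    slopes integral powers of 2.  Affine pieces on closed consecutive intervals
    force continuity, and positive slopes force strict monotonicity. *)
Definition thompsonF (f : R -> R) : Prop :=
  (forall x, (x < 0 \/ 1 < x) -> f x = x) /\
  f 0 = 0 /\ f 1 = 1 /\
  exists (n : nat) (p : nat -> R),
    p 0%nat = 0 /\ p n = 1 /\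
    (forall i, (i <= n)%nat -> dyadic (p i)) /\
    (forall i, (i < n)%nat -> p i < p (S i)) /\
    (forall i, (i < n)%nat -> exists (k : Z) (b : R),
        forall x, p i <= x <= p (S i) -> f x = powerRZ 2 k * x + b).

Definition fcomp (f g : R -> R) : R -> R := fun x => f (g x).

(* Main.v *)
Require Import Defs.
From Stdlib Require Import Reals List ZArith Lra Lia Classical FunctionalExtensionality.
Open Scope R_scope.

Lemma p_mono (p : nat -> R) n : (forall i, (i < n)%nat -> p i < p (S i)) ->
  forall i j, (i <= j <= n)%nat -> p i <= p j.
Proof.
  intros H i j; induction j as [|j IH]; intros Hij.
  - assert (i = 0%nat) by lia; subst; lra.
  - destruct (Nat.eq_dec i (S j)) as [->|Hne]; [lra|].
    assert (p i <= p j) by (apply IH; lia). assert (p j < p (S j)) by (apply H; lia). lra.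
Qed.

Lemma F_strict d : thompsonF d -> forall x y, x < y -> d x < d y.
Proof.
  intros (Hout & H0 & H1 & n & p & Hp0 & Hpn & _ & Hinc & Hpc).
  assert (Hin : forall i, (i <= n)%nat -> forall x y, 0 <= x < y -> y <= p i -> d x < d y).
  { induction i as [|i IH]; intros Hi x y Hxy Hy.
    - rewrite Hp0 in Hy; lra.
    - destruct (Rle_dec y (p i)) as [Hyi|Hyi]; [apply IH; lia || lra|].
      destruct (Hpc i ltac:(lia)) as (k & b & Hk).
      assert (Hpos : 0 < powerRZ 2 k) by (apply powerRZ_lt; lra).
      assert (Hdy : d y = powerRZ 2 k * y + b) by (apply Hk; lra).
      destruct (Rle_dec (p i) x) as [Hxi|Hxi].
      + rewrite (Hk x) by lra; rewrite Hdy. nra.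
      + assert (d x < d (p i)) by (apply IH; [lia|lra|lra]).
        rewrite (Hk (p i)) in H by (split; [lra| pose proof (Hinc i ltac:(lia)); lra]).
        rewrite Hdy. nra. }
  assert (Hin01 : forall x y, 0 <= x < y -> y <= 1 -> d x < d y)
    by (intros; apply (Hin n); [lia|lra|lra]).
  assert (Hle01 : forall x, 0 <= x <= 1 -> 0 <= d x <= 1).
  { intros x Hx. destruct (Req_dec x 0) as [->|]; [lra|].
    destruct (Req_dec x 1) as [->|]; [lra|].
    pose proof (Hin01 0 x ltac:(lra) ltac:(lra)); pose proof (Hin01 x 1 ltac:(lra) ltac:(lra)); lra. }
  intros x y Hxy.
  destruct (Rlt_dec x 0) as [Hx0|Hx0].
  - rewrite (Hout x) by lra.
    destruct (Rlt_dec y 0); [rewrite (Hout y) by lra; lra|].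
    destruct (Rle_dec y 1); [pose proof (Hle01 y ltac:(lra)); lra|rewrite (Hout y) by lra; lra].
  - destruct (Rle_dec x 1) as [Hx1|Hx1].
    + destruct (Rle_dec y 1); [apply Hin01; lra|].
      rewrite (Hout y) by lra. pose proof (Hle01 x ltac:(lra)); lra.
    + rewrite (Hout x) by lra; rewrite (Hout y) by lra; lra.
Qed.

Lemma F_near0 d : thompsonF d -> exists q j, 0 < q /\ q <= 1 /\
  forall x, 0 <= x <= q -> d x = powerRZ 2 j * x.
Proof.
  intros (Hout & H0 & H1 & n & p & Hp0 & Hpn & _ & Hinc & Hpc).
  destruct n as [|n]; [rewrite Hp0 in Hpn; lra|].
  destruct (Hpc 0%nat ltac:(lia)) as (k & b & Hk).
  pose proof (Hinc 0%nat ltac:(lia)). pose proof (p_mono p (S n) Hinc 1 (S n) ltac:(lia)).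
  assert (b = 0). { pose proof (Hk 0 ltac:(lra)). rewrite H0 in H3. lra. }
  exists (p 1%nat), k. split; [lra|split; [lra|]].
  intros x Hx. rewrite Hk by lra. lra.
Qed.

Definition fpf (c : R -> R) := forall x, 0 < x < 1 -> c x <> x.
Definition commf (u v : R -> R) := forall x, u (v x) = v (u x).
Definition mono (c : R->R) := forall x y, x <= y -> c x <= c y.
Definition invp (c c' : R -> R) := (forall x, c (c' x) = x) /\ (forall x, c' (c x) = x)
  /\ mono c /\ mono c' /\ c 0 = 0 /\ c 1 = 1.

Lemma invp_sym c c' : invp c c' -> invp c' c.
Proof.
  intros (H1 & H2 & H3 & H4 & H5 & H6). repeat split; auto.
  - rewrite <- H5 at 1; apply H2.
  - rewrite <- H6 at 1; apply H2.
Qed.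

Lemma fpf_inv c c' : invp c c' -> fpf c -> fpf c'.
Proof. intros (H1 & H2 & _) Hf x Hx E. apply (Hf x Hx). rewrite <- E at 1. apply H1. Qed.

Lemma comm_inv u c c' : invp c c' -> commf u c -> commf u c'.
Proof.
  intros (H1 & H2 & _) Hc x. rewrite <- (H1 x) at 2. rewrite Hc. now rewrite H2.
Qed.

Lemma Zstep g g' u w T : invp g g' -> commf u g -> commf w g ->
  (forall s, 0 <= s < T -> u s = w s) -> T < g T ->
  forall s, 0 <= s < g T -> u s = w s.
Proof.
  intros (H1 & H2 & H3 & H4 & H5 & H6) Hu Hw HT HgT s Hs.
  set (r := g' s).
  assert (Hr0 : 0 <= r). { unfold r. rewrite <- (H2 0), H5. apply H4. lra. }
  assert (HrT : r < T). { destruct (Rlt_dec r T); auto. exfalso.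
    assert (g T <= g r) by (apply H3; lra). unfold r in H; rewrite H1 in H. lra. }
  rewrite <- (H1 s). fold r. rewrite Hu, Hw, HT by lra. reflexivity.
Qed.

Lemma Zp c c' u w : invp c c' -> fpf c -> commf u c -> commf w c ->
  (exists dl, 0 < dl /\ forall x, 0 <= x <= dl -> u x = w x) -> u 1 = w 1 ->
  forall x, 0 <= x <= 1 -> u x = w x.
Proof.
  intros Hi Hf Hu Hw (dl & Hdl & Hd) H1.
  set (S := fun t => 0 <= t <= 1 /\ forall s, 0 <= s < t -> u s = w s).
  assert (Hb : bound S) by (exists 1; intros t [Ht _]; lra).
  assert (HS : S (Rmin dl 1)).
  { split. split; [apply Rmin_glb; lra| apply Rmin_r].
    intros s Hs. apply Hd. pose proof (Rmin_l dl 1). lra. }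
  destruct (completeness S Hb (ex_intro _ _ HS)) as (T & HTub & HTl).
  assert (HPT : forall s, 0 <= s < T -> u s = w s).
  { intros s Hs. destruct (classic (exists t, S t /\ s < t)) as [(t & [_ Ht] & Hst)|Hn].
    - apply Ht; lra.
    - exfalso. assert (T <= s); [|lra]. apply HTl. intros t Ht.
      destruct (Rle_dec t s); auto. exfalso; apply Hn; exists t; split; auto; lra. }
  assert (HT1 : T <= 1) by (apply HTl; intros t [Ht _]; lra).
  assert (HT0 : Rmin dl 1 <= T) by (apply HTub; auto).
  assert (Hmin0 : 0 < Rmin dl 1) by (apply Rmin_glb_lt; lra).
  destruct (Rlt_dec T 1) as [HTlt|HTlt].
  - exfalso.
    assert (Hex : exists g g', invp g g' /\ commf u g /\ commf w g /\ T < g T).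
    { destruct Hi as (I1 & I2 & I3 & I4 & I5 & I6) eqn:EHi.
      destruct (Rlt_dec T (c T)).
      - exists c, c'; auto.
      - exists c', c. split; [apply invp_sym; auto|].
        split; [apply (comm_inv _ c); auto|]. split; [apply (comm_inv _ c); auto|].
        assert (c T <> T) by (apply Hf; lra).
        destruct (Rle_dec (c' T) T); [|lra]. exfalso.
        assert (c (c' T) <= c T) by (apply I3; auto). rewrite I1 in H0. lra. }
    destruct Hex as (g & g' & Hg & Hug & Hwg & HgT).
    pose proof (Zstep g g' u w T Hg Hug Hwg HPT HgT) as Hst.
    assert (S (Rmin (g T) 1)).
    { split. split; [|apply Rmin_r]. apply Rmin_glb; lra.
      intros s Hs. apply Hst. pose proof (Rmin_l (g T) 1). lra. }
    pose proof (HTub _ H). assert (T < Rmin (g T) 1) by (apply Rmin_glb_lt; lra). lra.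
  - intros x Hx. destruct (Req_dec x 1) as [->|]; auto. apply HPT. lra.
Qed.
Lemma Kstep g g' d T : invp g g' -> commf d g -> g T < T ->
  (exists t, (0 < t < 1 /\ d t = t) /\ t < g' T) ->
  exists t, (0 < t < 1 /\ d t = t) /\ t < T.
Proof.
  intros (H1 & H2 & H3 & H4 & H5 & H6) Hd HgT (t & (Ht & Hdt) & HtT).
  exists (g t). split; [split|].
  - split.
    + assert (g 0 <= g t) by (apply H3; lra).
      destruct (Req_dec (g t) 0) as [E|]; [|lra].
      exfalso. assert (g' (g t) = g' 0) by now rewrite E.
      rewrite H2, <- H5, H2 in H0. lra.
    + assert (g t <= g 1) by (apply H3; lra).
      destruct (Req_dec (g t) 1) as [E|]; [|lra].
      exfalso. assert (g' (g t) = g' 1) by now rewrite E.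
      rewrite H2, <- H6, H2 in H0. lra.
  - rewrite Hd, Hdt. reflexivity.
  - assert (g t <= g (g' T)) by (apply H3; lra). rewrite H1 in H.
    destruct (Req_dec (g t) T) as [E|]; [|lra].
    exfalso. assert (g' (g t) = g' T) by now rewrite E. rewrite H2 in H0. lra.
Qed.

Lemma K1 c c' d : invp c c' -> fpf c -> thompsonF d -> commf d c ->
  (exists t0, 0 < t0 < 1 /\ d t0 = t0) -> forall x, d x = x.
Proof.
  intros Hi Hf Hd Hdc (t0 & Ht0 & Hdt0).
  set (E := fun x => exists t, (0 < t < 1 /\ d t = t) /\ x = - t).
  assert (Hb : bound E) by (exists 0; intros x (t & [Ht _] & ->); lra).
  destruct (completeness E Hb (ex_intro _ (-t0) (ex_intro _ t0 (conj (conj Ht0 Hdt0) eq_refl))))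
    as (M & HMub & HMl).
  set (T := - M).
  assert (Hlow : forall y, T < y -> exists t, (0 < t < 1 /\ d t = t) /\ t < y).
  { intros y Hy. apply NNPP. intros Hn. assert (M <= - y); [|unfold T in Hy; lra].
    apply HMl. intros x (t & Ht & ->). destruct (Rle_dec (-t) (-y)); auto.
    exfalso; apply Hn. exists t; split; auto; lra. }
  assert (HT0 : 0 <= T). { assert (M <= 0); [|unfold T; lra]. apply HMl.
    intros x (t & [Ht _] & ->); lra. }
  assert (HTt0 : T <= t0). { assert (- t0 <= M); [|unfold T; lra]. apply HMub.
    exists t0; auto. }
  assert (HTlb : forall t, (0 < t < 1 /\ d t = t) -> T <= t).
  { intros t Ht. assert (-t <= M) by (apply HMub; exists t; auto). unfold T; lra. }
  assert (HT : T = 0).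
  { destruct (Req_dec T 0); auto. exfalso.
    assert (Hex : exists g g', invp g g' /\ commf d g /\ g T < T).
    { destruct Hi as (I1 & I2 & I3 & I4 & I5 & I6) eqn:EHi.
      destruct (Rlt_dec (c T) T).
      - exists c, c'; auto.
      - exists c', c. split; [apply invp_sym; auto|].
        split; [apply (comm_inv _ c); auto|].
        assert (c T <> T) by (apply Hf; lra).
        destruct (Rle_dec T (c' T)); [|lra]. exfalso.
        assert (c T <= c (c' T)) by (apply I3; auto). rewrite I1 in H1. lra. }
    destruct Hex as (g & g' & Hg & Hdg & HgT).
    assert (Tlt : T < g' T).
    { destruct Hg as (I1 & I2 & I3 & _). destruct (Rlt_dec T (g' T)); auto.
      exfalso. assert (g (g' T) <= g T) by (apply I3; lra). rewrite I1 in H0. lra. }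
    destruct (Kstep g g' d T Hg Hdg HgT (Hlow _ Tlt)) as (t & Ht & Htl).
    pose proof (HTlb t Ht). lra. }
  destruct (F_near0 d Hd) as (q & j & Hq & Hq1 & Hdq).
  destruct (Hlow q ltac:(lra)) as (t & ((Ht & Hdt) & Htq)).
  assert (Hj : powerRZ 2 j = 1).
  { rewrite Hdq in Hdt by lra. apply (Rmult_eq_reg_r t); lra. }
  pose proof Hd as HHd; destruct HHd as (Hout & H0 & H1 & _).
  assert (Hid : forall x, 0 <= x <= 1 -> d x = (fun y => y) x).
  { apply (Zp c c' d (fun y => y) Hi Hf Hdc); [intros x; reflexivity| |auto].
    exists q; split; auto. intros x Hx. rewrite Hdq, Hj by lra. ring. }
  intros x. destruct (Rlt_dec x 0); [apply Hout; lra|].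
  destruct (Rle_dec x 1); [apply Hid; lra|apply Hout; lra].
Qed.

Lemma K2 c c' d1 d2 : invp c c' -> fpf c -> thompsonF d1 -> thompsonF d2 ->
  commf d1 c -> commf d2 c -> commf d1 d2.
Proof.
  intros Hi Hf Hd1 Hd2 H1c H2c.
  assert (F1 := Hd1); assert (F2 := Hd2).
  destruct F1 as (Out1 & Z1 & O1 & _). destruct F2 as (Out2 & Z2 & O2 & _).
  destruct (F_near0 d1 Hd1) as (q1 & j1 & Hq1 & Hq1' & E1).
  destruct (F_near0 d2 Hd2) as (q2 & j2 & Hq2 & Hq2' & E2).
  set (a1 := powerRZ 2 j1). set (a2 := powerRZ 2 j2).
  assert (0 < a1) by (apply powerRZ_lt; lra). assert (0 < a2) by (apply powerRZ_lt; lra).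
  assert (Hmid : forall x, 0 <= x <= 1 -> d1 (d2 x) = d2 (d1 x)).
  { apply (Zp c c' (fun x => d1 (d2 x)) (fun x => d2 (d1 x)) Hi Hf).
    - intros x. now rewrite H2c, H1c.
    - intros x. now rewrite H1c, H2c.
    - set (dl := Rmin (Rmin q1 q2) (Rmin (q1 / a2) (q2 / a1))).
      assert (0 < q1 / a2) by (apply Rdiv_lt_0_compat; lra).
      assert (0 < q2 / a1) by (apply Rdiv_lt_0_compat; lra).
      exists dl. split. { unfold dl; repeat apply Rmin_glb_lt; lra. }
      intros x Hx.
      assert (x <= q1 /\ x <= q2 /\ x <= q1 / a2 /\ x <= q2 / a1) as (B1 & B2 & B3 & B4).
      { unfold dl in Hx. pose proof (Rmin_l (Rmin q1 q2) (Rmin (q1 / a2) (q2 / a1))).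
        pose proof (Rmin_r (Rmin q1 q2) (Rmin (q1 / a2) (q2 / a1))).
        pose proof (Rmin_l q1 q2). pose proof (Rmin_r q1 q2).
        pose proof (Rmin_l (q1/a2) (q2/a1)). pose proof (Rmin_r (q1/a2) (q2/a1)). lra. }
      assert (a2 * x <= q1). { apply (Rmult_le_compat_l a2) in B3; [|lra].
        unfold Rdiv in B3. rewrite <- Rmult_assoc, (Rmult_comm a2 q1), Rmult_assoc,
          Rinv_r, Rmult_1_r in B3; lra. }
      assert (a1 * x <= q2). { apply (Rmult_le_compat_l a1) in B4; [|lra].
        unfold Rdiv in B4. rewrite <- Rmult_assoc, (Rmult_comm a1 q2), Rmult_assoc,
          Rinv_r, Rmult_1_r in B4; lra. }
      rewrite (E2 x) by lra. rewrite (E1 x) by lra. fold a1 a2.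
      rewrite E1 by nra. rewrite E2 by nra. fold a1 a2. ring.
    - simpl. rewrite O2, O1. auto. }
  intros x. destruct (Rlt_dec x 0).
  - rewrite (Out2 x) by lra; rewrite (Out1 x) by lra; rewrite (Out2 x) by lra; reflexivity.
  - destruct (Rle_dec x 1); [apply Hmid; lra|].
    rewrite (Out2 x) by lra; rewrite (Out1 x) by lra; rewrite (Out2 x) by lra; reflexivity.
Qed.
Definition fam (a : nat) (x : R) : R :=
  if Rlt_dec x 0 then x
  else if Rle_dec x (1/2) then / 2 ^ a * x
  else if Rle_dec x (1 - / 2 ^ a / 2) then x - 1/2 + / 2 ^ a / 2
  else if Rle_dec x 1 then 2 ^ a * x + 1 - 2 ^ a
  else x.

Definition gam (a : nat) (x : R) : R :=
  if Rlt_dec x 0 then x else if Rle_dec x (1/2) then fam a (2 * x) / 2 else x.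

Lemma pow2_facts a : (1 <= a)%nat -> 2 <= 2 ^ a /\ 0 < / 2 ^ a <= 1/2 /\ / 2 ^ a * 2 ^ a = 1.
Proof.
  intros Ha. assert (2 ^ 1 <= 2 ^ a) by (apply Rle_pow; lra || lia).
  simpl in H. split; [lra|]. split; [split|].
  - apply Rinv_0_lt_compat; lra.
  - apply Rinv_le_contravar in H; lra.
  - field. lra.
Qed.

Lemma slope_r a : / 2 ^ a = powerRZ 2 (- Z.of_nat a).
Proof. rewrite powerRZ_neg', <- pow_powerRZ. reflexivity. Qed.
Lemma slope_t a : 2 ^ a = powerRZ 2 (Z.of_nat a).
Proof. apply pow_powerRZ. Qed.
Lemma slope_1 : forall x:R, x = powerRZ 2 0 * x.
Proof. intros; rewrite powerRZ_O; ring. Qed.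

Lemma dy_frac a : dyadic (1 - / 2 ^ a / 2).
Proof.
  exists (2 ^ Z.of_nat (S a) - 1)%Z, (S a).
  rewrite minus_IZR, <- pow_IZR. simpl. field; repeat split; try (apply pow_nonzero); lra.
Qed.
Lemma dy_frac4 a : dyadic (1/2 - / 2 ^ a / 4).
Proof.
  exists (2 ^ Z.of_nat (S a) - 1)%Z, (S (S a)).
  rewrite minus_IZR, <- pow_IZR. simpl. field; repeat split; try (apply pow_nonzero); lra.
Qed.
Lemma dy_0 : dyadic 0. Proof. exists 0%Z, 0%nat. simpl; field. Qed.
Lemma dy_1 : dyadic 1. Proof. exists 1%Z, 0%nat. simpl; field. Qed.
Lemma dy_h : dyadic (1/2). Proof. exists 1%Z, 1%nat. simpl; field. Qed.
Lemma dy_q : dyadic (1/4). Proof. exists 1%Z, 2%nat. simpl; field. Qed.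

Ltac brk := repeat match goal with |- context [Rlt_dec ?a ?b] => destruct (Rlt_dec a b) end;
            repeat match goal with |- context [Rle_dec ?a ?b] => destruct (Rle_dec a b) end.

Lemma fam_F a : (1 <= a)%nat -> thompsonF (fam a).
Proof.
  intros Ha. destruct (pow2_facts a Ha) as (Ht & Hr & Hrt).
  pose proof (slope_r a) as Er. pose proof (slope_t a) as Et. pose proof (dy_frac a) as Dy1. pose proof (dy_frac4 a) as Dy2.
  unfold thompsonF, fam.
  set (r := / 2 ^ a) in *. set (t := 2 ^ a) in *. clearbody r t.
  assert (r/2 * t = 1/2) by (replace (r/2*t) with ((r*t)/2) by field; lra).
  split; [intros x Hx; brk; lra|].
  split; [brk; lra|]. split; [brk; lra|].
  exists 3%nat, (fun i : nat => match i with O => 0 | S O => 1/2 | S (S O) => 1 - r/2 | _ => 1 end).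
  split; [reflexivity|]. split; [reflexivity|].
  split. { intros i Hi. destruct i as [|[|[|i]]]; [apply dy_0|apply dy_h|exact Dy1|apply dy_1]. }
  split. { intros i Hi. destruct i as [|[|[|i]]]; lra || lia. }
  intros i Hi. destruct i as [|[|[|i]]]; [| | |lia].
  - exists (- Z.of_nat a)%Z, 0. intros x Hx. rewrite <- Er. brk; nra.
  - exists 0%Z, (- 1/2 + r/2). intros x Hx. rewrite powerRZ_O. brk; nra.
  - exists (Z.of_nat a), (1 - t). intros x Hx. rewrite <- Et. brk; nra.
Qed.

Lemma gam_F a : (1 <= a)%nat -> thompsonF (gam a).
Proof.
  intros Ha. destruct (pow2_facts a Ha) as (Ht & Hr & Hrt).
  pose proof (slope_r a) as Er. pose proof (slope_t a) as Et. pose proof (dy_frac a) as Dy1. pose proof (dy_frac4 a) as Dy2.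
  unfold thompsonF, gam, fam.
  set (r := / 2 ^ a) in *. set (t := 2 ^ a) in *. clearbody r t.
  assert (r/2 * t = 1/2) by (replace (r/2*t) with ((r*t)/2) by field; lra).
  split; [intros x Hx; brk; lra|].
  split; [brk; lra|]. split; [brk; lra|].
  exists 4%nat, (fun i : nat => match i with O => 0 | S O => 1/4 | S (S O) => 1/2 - r/4 | S (S (S O)) => 1/2 | _ => 1 end).
  split; [reflexivity|]. split; [reflexivity|].
  split. { intros i Hi. destruct i as [|[|[|[|i]]]];
    [apply dy_0|apply dy_q|exact Dy2|apply dy_h|apply dy_1]. }
  split. { intros i Hi. destruct i as [|[|[|[|i]]]]; lra || lia. }
  intros i Hi. destruct i as [|[|[|[|i]]]]; [| | | |lia].
  - exists (- Z.of_nat a)%Z, 0. intros x Hx. rewrite <- Er. brk; nra.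
  - exists 0%Z, (- 1/4 + r/4). intros x Hx. rewrite powerRZ_O. brk; nra.
  - exists (Z.of_nat a), (1/2 - t/2). intros x Hx. rewrite <- Et. brk; nra.
  - exists 0%Z, 0. intros x Hx. rewrite powerRZ_O. brk; nra.
Qed.
Lemma fam_max a : (1 <= a)%nat -> forall x, 0 <= x <= 1 ->
  let r := / 2 ^ a in let t := 2 ^ a in
  (r * x <= fam a x /\ x - 1/2 + r/2 <= fam a x /\ t * x + 1 - t <= fam a x) /\
  (fam a x = r * x \/ fam a x = x - 1/2 + r/2 \/ fam a x = t * x + 1 - t).
Proof.
  intros Ha x Hx. destruct (pow2_facts a Ha) as (Ht & Hr & Hrt). unfold fam.
  set (r := / 2 ^ a) in *. set (t := 2 ^ a) in *. clearbody r t. cbv zeta.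
  assert (r/2 * t = 1/2) by (replace (r/2*t) with ((r*t)/2) by field; lra).
  brk; (split; [repeat split; nra | tauto || lra]).
Qed.

Lemma fam_lt a b : (1 <= a)%nat -> (a < b)%nat -> forall x, 0 < x < 1 -> fam b x < fam a x.
Proof.
  intros Ha Hab x Hx.
  assert (Hb : (1 <= b)%nat) by lia.
  assert (Hp : 2 ^ a < 2 ^ b) by (apply Rlt_pow; lra || lia).
  assert (0 < 2 ^ a) by (apply pow_lt; lra).
  assert (Hi : / 2 ^ b < / 2 ^ a) by (apply Rinv_lt_contravar; nra).
  destruct (fam_max a Ha x ltac:(lra)) as ((A1 & A2 & A3) & _).
  destruct (fam_max b Hb x ltac:(lra)) as (_ & [B|[B|B]]); rewrite B; nra.
Qed.

Lemma gam_q a : gam a (1/4) = / 2 ^ a / 4.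
Proof. unfold gam, fam. brk; try lra; field. Qed.
Lemma gam_h a : (1 <= a)%nat -> gam a (1/2) = 1/2.
Proof.
  intros Ha. destruct (pow2_facts a Ha) as (Ht & Hr & Hrt). unfold gam, fam.
  set (r := / 2 ^ a) in *. set (t := 2 ^ a) in *. clearbody r t.
  brk; try lra; try (field_simplify; lra).
Qed.
Lemma pigeon {A : Type} (l : list A) : forall (P : nat -> A -> Prop),
  (forall i, (i <= length l)%nat -> exists a, In a l /\ P i a) ->
  exists i j a, i <> j /\ (i <= length l)%nat /\ (j <= length l)%nat /\ P i a /\ P j a.
Proof.
  induction l as [|a l IH]; intros P HP.
  - destruct (HP 0%nat ltac:(simpl; lia)) as (a & [] & _).
  - simpl length in *. destruct (HP (S (length l)) ltac:(lia)) as (bN & HbN & PbN).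
    destruct (classic (exists i, (i <= length l)%nat /\ P i bN)) as [(i & Hi & HPi)|Hno].
    + exists i, (S (length l)), bN. repeat split; auto; lia.
    + destruct HbN as [Eq|HbN]; [subst bN|].
      * destruct (IH P) as (i & j & c & Hij & Hi & Hj & Pi & Pj).
        { intros i Hi. destruct (HP i ltac:(lia)) as (c & [Ec|Hc] & Pc); [subst c|].
          - exfalso; apply Hno; eauto.
          - eauto. }
        exists i, j, c. repeat split; auto; lia.
      * destruct (IH (fun i b => P i b \/ (P i a /\ b = bN))) as (i & j & c & Hij & Hi & Hj & Pi & Pj).
        { intros i Hi. destruct (HP i ltac:(lia)) as (c & [Ec|Hc] & Pc); [subst c|].
          - exists bN; split; auto.
          - exists c; split; auto. }
        destruct Pi as [Pi|[Pi Ei]]; destruct Pj as [Pj|[Pj Ej]].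
        -- exists i, j, c. repeat split; auto; lia.
        -- subst c. exfalso; apply Hno; exists i; split; auto; lia.
        -- subst c. exfalso; apply Hno; exists j; split; auto; lia.
        -- exists i, j, a. repeat split; auto; lia.
Qed.

Section GrpLemmas.
Variable G : Grp.
Lemma gmulV_r (x : G) : gmul G x (ginv G x) = gone G.
Proof.
  set (y := ginv G x).
  transitivity (gmul G (gmul G (ginv G y) y) (gmul G x y)).
  { rewrite gmulV, gmul1. reflexivity. }
  rewrite <- gmulA. rewrite (gmulA G y x y). unfold y at 2. rewrite gmulV, gmul1.
  apply gmulV.
Qed.
Lemma gmul1_r (x : G) : gmul G x (gone G) = x.
Proof. rewrite <- (gmulV G x), gmulA, gmulV_r, gmul1. reflexivity. Qed.
End GrpLemmas.

Definition pinv (G1 G2 : Grp) (p : gcar G1 * gcar G2) : gcar G1 * gcar G2 :=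
  (ginv G1 (fst p), ginv G2 (snd p)).

Lemma F_inj d : thompsonF d -> forall x y, d x = d y -> x = y.
Proof.
  intros Hd x y E. destruct (Rtotal_order x y) as [H|[H|H]]; auto;
  apply (F_strict d Hd) in H; lra.
Qed.

Lemma F_mono d : thompsonF d -> mono d.
Proof.
  intros Hd x y H. destruct (Req_dec x y) as [->|]; [lra|].
  left; apply F_strict; auto; lra.
Qed.
Lemma core (IA IB : (R -> R) -> Prop) :
  (forall f, IA f -> thompsonF f /\ exists f', invp f f') ->
  (forall f, IB f -> thompsonF f /\ exists f', invp f f') ->
  (forall a b, IA a -> IB b -> commf a b) ->
  forall al, IA al -> fpf al ->
  forall G0 al' be', thompsonF G0 -> IA al' -> IB be' -> (forall x, G0 x = al' (be' x)) ->
  G0 (1/2) = 1/2 -> G0 (1/4) <> 1/4 ->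
  forall b, IB b -> forall x, b x = x.
Proof.
  intros HA HB Hc al Hal Hfal G0 al' be' HG0 Hal' Hbe' EG0 Gh Gq b Hb x.
  apply NNPP; intros Hbx.
  destruct (HA al Hal) as (Fal & al_i & Ial).
  destruct (HB b Hb) as (Fb & b_i & Ib).
  assert (Hfb : fpf b).
  { intros t Ht Ebt. apply Hbx. apply (K1 al al_i b Ial Hfal Fb).
    - intros y. symmetry. apply Hc; auto.
    - exists t; auto. }
  assert (Hcaa : commf al' al).
  { apply (K2 b b_i al' al Ib Hfb); try apply HA; auto. }
  assert (HGc : commf G0 al).
  { intros y. rewrite !EG0. rewrite <- (Hc al be' Hal Hbe'). apply Hcaa. }
  assert (Hid : forall y, G0 y = y).
  { apply (K1 al al_i G0 Ial Hfal HG0 HGc). exists (1/2). split; [lra|auto]. }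
  apply Gq, Hid.
Qed.
Theorem proposition7p1 :
  (* F is infinite *)
  ~ (exists l : list (R -> R), forall f, thompsonF f -> In f l) /\
  (* F is not presentable by a product *)
  (forall (G1 G2 : Grp) (phi : gcar G1 * gcar G2 -> (R -> R)),
     (forall p, thompsonF (phi p)) ->
     (forall p q, phi (pmul G1 G2 p q) = fcomp (phi p) (phi q)) ->
     (exists l : list (R -> R),
        Forall thompsonF l /\
        forall f, thompsonF f ->
          exists g h, In g l /\ f = fcomp g (phi h)) ->
     (exists l : list (R -> R), forall a : gcar G1, In (phi (a, gone G2)) l) \/
     (exists l : list (R -> R), forall b : gcar G2, In (phi (gone G1, b)) l)).
Proof.
  split.
  - intros (l & Hl).
    destruct (pigeon l (fun i g => g = fam (S i))) as (i & j & g & Hij & _ & _ & Ei & Ej).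
    { intros i _. exists (fam (S i)). split; auto. apply Hl, fam_F; lia. }
    rewrite Ei in Ej.
    destruct (Nat.lt_total i j) as [H|[H|H]]; [|lia|].
    + pose proof (fam_lt (S i) (S j) ltac:(lia) ltac:(lia) (1/2) ltac:(lra)) as C.
      rewrite Ej in C. lra.
    + pose proof (fam_lt (S j) (S i) ltac:(lia) ltac:(lia) (1/2) ltac:(lra)) as C.
      rewrite Ej in C. lra.
  - intros G1 G2 phi Hphi Hhom (l & Hl & Hcov).
    assert (Hm : forall p q x, phi (pmul G1 G2 p q) x = phi p (phi q x)).
    { intros p q x. rewrite Hhom. reflexivity. }
    assert (H11 : forall x, phi (gone G1, gone G2) x = x).
    { intros x. apply (F_inj _ (Hphi (gone G1, gone G2))). rewrite <- Hm.
      unfold pmul; simpl. rewrite !gmul1. reflexivity. }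
    assert (Hinvp : forall p, invp (phi p) (phi (pinv G1 G2 p))).
    { intros [a b]. destruct (Hphi (a,b)) as (_ & Z0 & Z1 & _). repeat split.
      - intros x. rewrite <- Hm. unfold pmul, pinv; simpl. rewrite !gmulV_r. apply H11.
      - intros x. rewrite <- Hm. unfold pmul, pinv; simpl. rewrite !gmulV. apply H11.
      - apply F_mono, Hphi.
      - apply F_mono, Hphi.
      - exact Z0.
      - exact Z1. }
    assert (Hcomm : forall a b x, phi (a, gone G2) (phi (gone G1, b) x)
                                 = phi (gone G1, b) (phi (a, gone G2) x)).
    { intros. rewrite <- !Hm. unfold pmul; simpl. rewrite !gmul1, !gmul1_r. reflexivity. }
    assert (Hdec : forall a b x, phi (a, b) x = phi (a, gone G2) (phi (gone G1, b) x)).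
    { intros. rewrite <- Hm. unfold pmul; simpl. rewrite gmul1, gmul1_r. reflexivity. }
    assert (Hcos : forall (f1 f2 g : R -> R) h1 h2, (forall x, f1 x = g (phi h1 x)) ->
              (forall x, f2 x = g (phi h2 x)) ->
              forall x, f1 (phi (pmul G1 G2 (pinv G1 G2 h1) h2) x) = f2 x).
    { intros f1 f2 g h1 h2 E1 E2 x. rewrite E1, E2. f_equal. rewrite <- Hm. f_equal.
      destruct h1 as [a b], h2 as [c d]. unfold pmul, pinv; simpl.
      rewrite !gmulA, !gmulV_r, !gmul1. reflexivity. }
    assert (Hcov' : forall f, thompsonF f -> exists g, In g l /\ exists h, forall x, f x = g (phi h x)).
    { intros f Hf. destruct (Hcov f Hf) as (g & h & Hg & E). exists g; split; auto.
      exists h; intros x; rewrite E; reflexivity. }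
    destruct (pigeon l (fun i g => exists h, forall x, fam (S i) x = g (phi h x)))
      as (i & j & g & Hij & _ & _ & (hi & Ei) & (hj & Ej)).
    { intros i _. apply Hcov', fam_F; lia. }
    set (p := pmul G1 G2 (pinv G1 G2 hi) hj).
    assert (HF1 : fpf (phi p)).
    { intros x Hx E. pose proof (Hcos _ _ _ _ _ Ei Ej x) as C. fold p in C. rewrite E in C.
      destruct (Nat.lt_total i j) as [H|[H|H]]; [|lia|].
      - pose proof (fam_lt (S i) (S j) ltac:(lia) ltac:(lia) x Hx). lra.
      - pose proof (fam_lt (S j) (S i) ltac:(lia) ltac:(lia) x Hx). lra. }
    destruct (pigeon l (fun i g => exists h, forall x, gam (S i) x = g (phi h x)))
      as (i' & j' & g' & Hij' & _ & _ & (hi' & Ei') & (hj' & Ej')).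
    { intros i0 _. apply Hcov', gam_F; lia. }
    set (q := pmul G1 G2 (pinv G1 G2 hi') hj').
    assert (Gh : phi q (1/2) = 1/2).
    { pose proof (Hcos _ _ _ _ _ Ei' Ej' (1/2)) as C. fold q in C. rewrite (gam_h (S j')) in C by lia.
      apply (F_inj _ (gam_F (S i') ltac:(lia))). rewrite C, gam_h by lia. reflexivity. }
    assert (Gq : phi q (1/4) <> 1/4).
    { intros E. pose proof (Hcos _ _ _ _ _ Ei' Ej' (1/4)) as C. fold q in C. rewrite E, !gam_q in C.
      assert (C2 : 2 ^ (S i') = 2 ^ (S j')) by (apply Rinv_eq_reg; lra).
      destruct (Nat.lt_total i' j') as [H|[H|H]]; [|lia|].
      - pose proof (Rlt_pow 2 (S i') (S j') ltac:(lra) ltac:(lia)). lra.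
      - pose proof (Rlt_pow 2 (S j') (S i') ltac:(lra) ltac:(lia)). lra. }
    set (IA := fun f : R -> R => exists a, f = phi (a, gone G2)).
    set (IB := fun f : R -> R => exists b, f = phi (gone G1, b)).
    assert (HA : forall f, IA f -> thompsonF f /\ exists f', invp f f').
    { intros f (a & ->). split; [apply Hphi|eexists; apply Hinvp]. }
    assert (HB : forall f, IB f -> thompsonF f /\ exists f', invp f f').
    { intros f (a & ->). split; [apply Hphi|eexists; apply Hinvp]. }
    assert (HAB : forall a b, IA a -> IB b -> commf a b).
    { intros f f2 (a & ->) (b & ->) x. apply Hcomm. }
    assert (HBA : forall a b, IB a -> IA b -> commf a b).
    { intros f f2 (a & ->) (b & ->) x. symmetry. apply Hcomm. }
    set (al := phi (fst p, gone G2)). set (be := phi (gone G1, snd p)).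
    assert (EF1 : forall x, phi p x = al (be x)).
    { intros x. rewrite (surjective_pairing p) at 1. apply Hdec. }
    assert (Hal : (exists t, 0 < t < 1 /\ al t = t) -> forall x, al x = x).
    { intros Ht. apply (K1 (phi p) (phi (pinv G1 G2 p)) al (Hinvp p) HF1 (Hphi _)); auto.
      intros x. rewrite !EF1. f_equal. unfold al, be. apply Hcomm. }
    assert (Hbe : (exists t, 0 < t < 1 /\ be t = t) -> forall x, be x = x).
    { intros Ht. apply (K1 (phi p) (phi (pinv G1 G2 p)) be (Hinvp p) HF1 (Hphi _)); auto.
      intros x. rewrite !EF1. unfold al, be. rewrite <- Hcomm. reflexivity. }
    destruct (classic (exists t, 0 < t < 1 /\ al t = t)) as [Ha|Ha].
    + destruct (classic (exists t, 0 < t < 1 /\ be t = t)) as [Hb|Hb].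
      * exfalso. apply (HF1 (1/2)); [lra|]. rewrite EF1, (Hbe Hb), (Hal Ha). reflexivity.
      * assert (Hfb : fpf be) by (intros t Ht E; apply Hb; eauto).
        pose proof (core IB IA HB HA HBA be (ex_intro _ _ eq_refl) Hfb (phi q)
          (phi (gone G1, snd q)) (phi (fst q, gone G2)) (Hphi q)
          (ex_intro _ _ eq_refl) (ex_intro _ _ eq_refl)) as Co.
        left. exists ((fun x : R => x) :: nil). intros a. left.
        apply functional_extensionality. intros x. symmetry.
        apply Co; auto. 2: exists a; reflexivity.
        intros y. rewrite (surjective_pairing q) at 1. rewrite Hdec. apply Hcomm.
    + assert (Hfa : fpf al) by (intros t Ht E; apply Ha; eauto).
      pose proof (core IA IB HA HB HAB al (ex_intro _ _ eq_refl) Hfa (phi q)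
        (phi (fst q, gone G2)) (phi (gone G1, snd q)) (Hphi q)
        (ex_intro _ _ eq_refl) (ex_intro _ _ eq_refl)) as Co.
      right. exists ((fun x : R => x) :: nil). intros b. left.
      apply functional_extensionality. intros x. symmetry.
      apply Co; auto. 2: exists b; reflexivity.
      intros y. rewrite (surjective_pairing q) at 1. apply Hdec.
Qed.
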